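(* Let $\mathcal{R}^{rsc}$ be a rich single-crossing domain and $F:\mathcal{R}^{rsc}\to\mathbb{Z}$ strategy-proof. Then $F$ is monotone, $V^F$ is continuous, and $F$ is locally strategy-proof in range.
   Context: $\mathbb{Z}=[0,\infty)\times[0,1]$; $(t',q')<(t'',q'')$ means $t'<t''$, $q'<q''$; $x\le y$ means $x=y$ or $x<y$; $\square(z)=\{x:x\le z\}$. A classical preference is a complete transitive relation $R$ on $\mathbb{Z}$ (strict part $P$, indifference $I$) strictly decreasing in $t$ for fixed $q$, strictly increasing in $q$ for fixed $t$, with closed upper and lower contour sets. Distinct classical preferences satisfy single-crossing if any indifference set of one meets any indifference set of the other in at most one point. A rich single-crossing domain $\mathcal{R}^{rsc}$ is a set of pairwise single-crossing classical preferences such that for all $x'<x''$ some member is indifferent between them. For distinct members, $R'\prec R''$ means $\square(z)\cap\{x:xR''z\}\subseteq\square(z)\cap\{x:xR'z\}$ for all $z$; $\prec$ is a linear order, $\mathcal{R}^{rsc}$ has the order topology. A mechanism $F:\mathcal{R}^{rsc}\to\mathbb{Z}$ with range $Rn(F)$ is strategy-proof if $F(R')R'F(R'')$ for all $R',R''$; monotone if $R'\prec R''$ implies $F(R')\le F(R'')$. $V^F(R)=\{z:zIF(R)\}$ is continuous if for every $R$ and every monotone sequence $R^n\to R$ (i.e. $R^n\precsim R^{n+1}$ for all $n$ or $R^{n+1}\precsim R^n$ for all $n$), $F(R^n)$ converges and $\lim F(R^n)\,I\,F(R)$. $Rn(F)$ is ordered if any two distinct elements $x',x''$ satisfy $x'<x''$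 or $x''<x'$. For ordered $Rn(F)$, two elements $x'<x''$ of $Rn(F)$ are adjacent if no $z\in Rn(F)$ satisfies $x'<z<x''$. $F$ is locally strategy-proof in range if $Rn(F)$ is ordered and for all $R',R''$ with $F(R'),F(R'')$ adjacent, $F(R')R'F(R'')$ and $F(R'')R''F(R')$. *)

(* Defs.v *)
From Stdlib Require Import Reals.
From Coquelicot Require Import Coquelicot.
Open Scope R_scope.

(* Points of Z = [0,oo) x [0,1]; first component t (money), second q. *)
Definition pt := (R * R)%type.
Definition inZ (x : pt) : Prop := 0 <= fst x /\ 0 <= snd x <= 1.

Definition ltZ (x y : pt) : Prop := fst x < fst y /\ snd x < snd y.
Definition leZ (x y : pt) : Prop := x = y \/ ltZ x y.
Definition box (z : pt) (x : pt) : Prop := inZ x /\ leZ x z.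

(* A (weak) preference relation: Rel x y means "x is weakly preferred to y". *)
Definition Pref := pt -> pt -> Prop.
Definition Pstrict (Rl : Pref) (x y : pt) : Prop := Rl x y /\ ~ Rl y x.
Definition Indiff (Rl : Pref) (x y : pt) : Prop := Rl x y /\ Rl y x.

Definition classical (Rl : Pref) : Prop :=
  (forall x y, Rl x y -> inZ x /\ inZ y) /\
  (forall x y, inZ x -> inZ y -> Rl x y \/ Rl y x) /\
  (forall x y z, Rl x y -> Rl y z -> Rl x z) /\
  (forall t t' q, 0 <= t -> t < t' -> 0 <= q <= 1 -> Pstrict Rl (t, q) (t', q)) /\
  (forall t q q', 0 <= t -> 0 <= q -> q < q' -> q' <= 1 -> Pstrict Rl (t, q') (t, q)) /\
  (forall z, inZ z -> closed (fun x => Rl x z) /\ closed (fun x => Rl z x)).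

Definition single_crossing (R1 R2 : Pref) : Prop :=
  forall z1 z2, inZ z1 -> inZ z2 ->
  forall x y, Indiff R1 x z1 -> Indiff R2 x z2 ->
              Indiff R1 y z1 -> Indiff R2 y z2 -> x = y.

Definition rich_single_crossing (D : Pref -> Prop) : Prop :=
  (forall Rl, D Rl -> classical Rl) /\
  (forall R1 R2, D R1 -> D R2 -> R1 <> R2 -> single_crossing R1 R2) /\
  (forall x1 x2, inZ x1 -> inZ x2 -> ltZ x1 x2 -> exists Rl, D Rl /\ Indiff Rl x1 x2).

Definition precD (R1 R2 : Pref) : Prop :=
  R1 <> R2 /\
  forall z, inZ z -> forall x, box z x -> R2 x z -> R1 x z.
Definition precsimD (R1 R2 : Pref) : Prop := precD R1 R2 \/ R1 = R2.

Definition mechanism (D : Pref -> Prop) (F : Pref -> pt) : Prop :=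
  forall Rl, D Rl -> inZ (F Rl).

Definition strategy_proof (D : Pref -> Prop) (F : Pref -> pt) : Prop :=
  forall R1 R2, D R1 -> D R2 -> R1 (F R1) (F R2).

Definition monotone (D : Pref -> Prop) (F : Pref -> pt) : Prop :=
  forall R1 R2, D R1 -> D R2 -> precD R1 R2 -> leZ (F R1) (F R2).

(* Convergence in the order topology of (D, precD): the sequence eventually
   enters every subbasic open ray containing the limit. *)
Definition order_converges (D : Pref -> Prop) (Rs : nat -> Pref) (Rl : Pref) : Prop :=
  (forall a, D a -> precD a Rl -> exists N, forall n, (N <= n)%nat -> precD a (Rs n)) /\
  (forall b, D b -> precD Rl b -> exists N, forall n, (N <= n)%nat -> precD (Rs n) b).

Definition monotone_seq (Rs : nat -> Pref) : Prop :=
  (forall n, precsimD (Rs n) (Rs (S n))) \/ (forall n, precsimD (Rs (S n)) (Rs n)).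

Definition VF_continuous (D : Pref -> Prop) (F : Pref -> pt) : Prop :=
  forall Rl, D Rl ->
  forall Rs : nat -> Pref, (forall n, D (Rs n)) -> monotone_seq Rs ->
    order_converges D Rs Rl ->
    exists l : pt, filterlim (fun n => F (Rs n)) eventually (locally l) /\
                   Indiff Rl l (F Rl).

Definition in_range (D : Pref -> Prop) (F : Pref -> pt) (x : pt) : Prop :=
  exists Rl, D Rl /\ F Rl = x.

Definition ordered_range (D : Pref -> Prop) (F : Pref -> pt) : Prop :=
  forall x y, in_range D F x -> in_range D F y -> x <> y -> ltZ x y \/ ltZ y x.

Definition adjacent (D : Pref -> Prop) (F : Pref -> pt) (x y : pt) : Prop :=
  in_range D F x /\ in_range D F y /\ ltZ x y /\
  ~ (exists z, in_range D F z /\ ltZ x z /\ ltZ z y).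

Definition locally_sp_in_range (D : Pref -> Prop) (F : Pref -> pt) : Prop :=
  ordered_range D F /\
  forall R1 R2, D R1 -> D R2 ->
    (adjacent D F (F R1) (F R2) \/ adjacent D F (F R2) (F R1)) ->
    R1 (F R1) (F R2) /\ R2 (F R2) (F R1).

(* Main.v *)
Require Import Defs.
From Stdlib Require Import Reals Lra Lia Classical.
From Coquelicot Require Import Coquelicot.
Open Scope R_scope.
Set Bullet Behavior "Strict Subproofs".

Definition close (e : R) (a b : pt) : Prop :=
  Rabs (fst a - fst b) < e /\ Rabs (snd a - snd b) < e.

Lemma ball_close (x y : R * R) e : ball x e y <-> close e y x.
Proof.
  unfold ball; simpl; unfold prod_ball; unfold ball; simpl.
  unfold AbsRing_ball, abs, minus, plus, opp; simpl. unfold close, Rminus. tauto.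
Qed.

Lemma open_of_closed (P : pt -> Prop) (x : pt) :
  closed P -> ~ P x -> exists e, 0 < e /\ forall y, close e y x -> ~ P y.
Proof.
  intros Hc Hn.
  assert (Hl : locally x (fun y => ~ P y)).
  { apply NNPP. intro H. apply Hn. apply Hc. exact H. }
  destruct Hl as [eps He]. exists eps. split. apply cond_pos.
  intros y Hy. apply He. apply ball_close. exact Hy.
Qed.

Lemma closed_lim (P : pt -> Prop) (x : pt) :
  closed P -> (forall e, 0 < e -> exists y, close e y x /\ P y) -> P x.
Proof.
  intros Hc H. apply Hc. intros [eps He].
  destruct (H eps (cond_pos eps)) as [y [Hy Py]].
  apply (He y). apply ball_close. exact Hy. exact Py.
Qed.

Section Cl.
Variable Rl : Pref.
Hypothesis HR : classical Rl.

Lemma cl_Z x y : Rl x y -> inZ x /\ inZ y.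
Proof. apply HR. Qed.
Lemma cl_total x y : inZ x -> inZ y -> Rl x y \/ Rl y x.
Proof. apply HR. Qed.
Lemma cl_trans x y z : Rl x y -> Rl y z -> Rl x z.
Proof. apply HR. Qed.
Lemma cl_refl x : inZ x -> Rl x x.
Proof. intro H. destruct (cl_total x x H H); auto. Qed.
Lemma cl_upper z : inZ z -> closed (fun x => Rl x z).
Proof. intro H. apply HR. exact H. Qed.
Lemma cl_lower z : inZ z -> closed (fun x => Rl z x).
Proof. intro H. apply HR. exact H. Qed.

Lemma cl_not x y : inZ x -> inZ y -> ~ Rl x y -> Rl y x.
Proof. intros Hx Hy Hn. destruct (cl_total x y Hx Hy); tauto. Qed.

Lemma wdom x y : inZ x -> inZ y -> fst x <= fst y -> snd y <= snd x -> Rl x y.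
Proof.
  intros Hx Hy H1 H2. destruct x as [a b], y as [c d]; simpl in *.
  destruct HR as [_ [_ [_ [Ht [Hq _]]]]].
  unfold inZ in *; simpl in *.
  assert (Hm : Rl (a, b) (a, d)).
  { destruct (Req_dec b d). subst. apply cl_refl. unfold inZ; simpl; lra.
    apply (Hq a d b); lra. }
  assert (Hm2 : Rl (a, d) (c, d)).
  { destruct (Req_dec a c). subst. apply cl_refl. unfold inZ; simpl; lra.
    apply (Ht a c d); lra. }
  eapply cl_trans; eauto.
Qed.

Lemma sdom x y : inZ x -> inZ y -> fst x <= fst y -> snd y <= snd x -> x <> y ->
  Pstrict Rl x y.
Proof.
  intros Hx Hy H1 H2 Hne. destruct x as [a b], y as [c d]; simpl in *.
  destruct HR as [_ [_ [_ [Ht [Hq _]]]]].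
  unfold inZ in *; simpl in *.
  destruct (Req_dec a c).
  - subst. assert (b <> d) by (intro; subst; tauto).
    apply (Hq c d b); lra.
  - assert (Hs : Pstrict Rl (a, d) (c, d)) by (apply (Ht a c d); lra).
    assert (Hw : Rl (a, b) (a, d)) by (apply wdom; unfold inZ; simpl; lra).
    destruct Hs as [Hs1 Hs2]. split. eapply cl_trans; eauto.
    intro Hc. apply Hs2. eapply cl_trans; eauto.
Qed.

Lemma strict_weak x y z : Pstrict Rl x y -> Rl y z -> Pstrict Rl x z.
Proof.
  intros [H1 H2] H3. split. eapply cl_trans; eauto. intro H. apply H2. eapply cl_trans; eauto.
Qed.
Lemma weak_strict x y z : Rl x y -> Pstrict Rl y z -> Pstrict Rl x z.
Proof.
  intros H1 [H2 H3]. split. eapply cl_trans; eauto. intro H. apply H3. eapply cl_trans; eauto.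
Qed.

Lemma joint_open y z : inZ y -> inZ z -> Rl y z -> ~ Rl z y ->
  exists e, 0 < e /\ forall y' z', inZ y' -> inZ z' -> close e y' y -> close e z' z ->
     Rl y' z' /\ ~ Rl z' y'.
Proof.
  intros Hy Hz H1 H2.
  destruct (open_of_closed _ y (cl_lower z Hz) H2) as [e1 [He1 Ho1]].
  set (m := (fst y + e1/2, snd y)).
  assert (Hm : inZ m). { unfold m, inZ in *; simpl; lra. }
  assert (Hnm : ~ Rl z m). { apply Ho1. unfold close, m; simpl.
     rewrite Rminus_diag, Rabs_R0. replace (fst y + e1 / 2 - fst y) with (e1/2) by ring.
     rewrite Rabs_pos_eq; lra. }
  assert (Hym : Pstrict Rl y m).
  { apply sdom; auto; unfold m; simpl; try lra. intro E. destruct y; unfold m in E; simpl in E.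
    injection E; lra. }
  destruct (open_of_closed _ y (cl_lower m Hm) (proj2 Hym)) as [e2 [He2 Ho2]].
  destruct (open_of_closed _ z (cl_upper m Hm) Hnm) as [e3 [He3 Ho3]].
  exists (Rmin e2 e3). split. apply Rmin_pos; auto.
  intros y' z' Hy' Hz' C1 C2.
  assert (A1 : ~ Rl m y'). { apply Ho2. destruct C1; split; eapply Rlt_le_trans; eauto; apply Rmin_l. }
  assert (A2 : ~ Rl z' m). { apply Ho3. destruct C2; split; eapply Rlt_le_trans; eauto; apply Rmin_r. }
  assert (B1 : Rl y' m) by (apply cl_not; auto).
  assert (B2 : Rl m z') by (apply cl_not; auto).
  split. eapply cl_trans; eauto. intro H. apply A2. eapply cl_trans; eauto.
Qed.
End Cl.

Lemma conn (a b : R) (U V : R -> Prop) :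
  a <= b ->
  (forall x, a <= x <= b -> U x -> exists d, 0 < d /\ forall y, a <= y <= b -> Rabs (y - x) < d -> U y) ->
  (forall x, a <= x <= b -> V x -> exists d, 0 < d /\ forall y, a <= y <= b -> Rabs (y - x) < d -> V y) ->
  (forall x, a <= x <= b -> U x \/ V x) ->
  U a -> V b -> exists x, a <= x <= b /\ U x /\ V x.
Proof.
  intros Hab oU oV cov Ua Vb.
  apply NNPP. intro H.
  set (E := fun x => a <= x <= b /\ forall y, a <= y <= x -> U y).
  assert (Ea : E a). { split. lra. intros y Hy. replace y with a by lra. exact Ua. }
  assert (Eb : bound E). { exists b. intros x [Hx _]. lra. }
  destruct (completeness E Eb (ex_intro _ a Ea)) as [s [Hs1 Hs2]].
  assert (Has : a <= s) by (apply Hs1; exact Ea).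
  assert (Hsb : s <= b) by (apply Hs2; intros x [Hx _]; lra).
  assert (Cl : forall d, 0 < d -> exists x, E x /\ s - d < x).
  { intros d Hd. apply NNPP. intro Hn.
    assert (s <= s - d). { apply Hs2. intros x Ex. apply Rnot_lt_le. intro. apply Hn. exists x. auto. }
    lra. }
  destruct (cov s (conj Has Hsb)) as [Us | Vs].
  - destruct (oU s (conj Has Hsb) Us) as [d [Hd Hu]].
    destruct (Cl d Hd) as [x [[Hx1 Hx2] Hx3]].
    assert (Hxs : x <= s) by (apply Hs1; split; auto).
    set (x' := Rmin b (s + d/2)).
    assert (Ex' : E x').
    { split. split. unfold x'. apply Rmin_case; lra. apply Rmin_l.
      intros y Hy. destruct (Rle_dec y x). apply Hx2. lra.
      apply Hu. split. lra. assert (x' <= b) by apply Rmin_l. lra.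
      assert (x' <= s + d/2) by apply Rmin_r. apply Rabs_def1; lra. }
    assert (Hx's : x' <= s) by (apply Hs1; exact Ex').
    unfold x' in Hx's. revert Hx's. apply Rmin_case_strong; intros Hm Hle.
    + assert (s = b) by lra. subst s. apply H. exists b. split. lra. auto.
    + lra.
  - destruct (oV s (conj Has Hsb) Vs) as [d [Hd Hv]].
    destruct (Cl d Hd) as [x [[Hx1 Hx2] Hx3]].
    assert (Hxs : x <= s) by (apply Hs1; split; auto).
    apply H. exists x. split. auto. split. apply Hx2; lra.
    apply Hv. auto. apply Rabs_def1; lra.
Qed.

Definition M1 (l : R) := Rmax 0 (l - 1).
Definition M2 (l : R) := Rmax 0 (1 - l).
Definition phi (zt zq t1 q1 l : R) : pt := (t1 + M1 l * (zt - t1), q1 + M2 l * (zq - q1)).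
Definition good (zt zq t1 q1 : R) := 0 <= t1 < zt /\ 0 <= q1 < zq /\ zq <= 1.

Lemma Rmax0_lip a b : Rabs (Rmax 0 a - Rmax 0 b) <= Rabs (a - b).
Proof.
  unfold Rmax. destruct (Rle_dec 0 a); destruct (Rle_dec 0 b);
  unfold Rabs; repeat destruct Rcase_abs; lra.
Qed.

Lemma M1_range l : 0 <= l <= 2 -> 0 <= M1 l <= 1.
Proof. unfold M1, Rmax. destruct Rle_dec; lra. Qed.
Lemma M2_range l : 0 <= l <= 2 -> 0 <= M2 l <= 1.
Proof. unfold M2, Rmax. destruct Rle_dec; lra. Qed.

Section Phi.
Variables zt zq t1 q1 : R.
Hypothesis G : good zt zq t1 q1.

Lemma good_Z : inZ (zt, zq).
Proof. unfold good, inZ in *; simpl; lra. Qed.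

Lemma phi_Z l : 0 <= l <= 2 -> inZ (phi zt zq t1 q1 l).
Proof.
  intro Hl. pose proof (M1_range l Hl). pose proof (M2_range l Hl).
  unfold good, inZ, phi in *; simpl. split; nra.
Qed.

Lemma phi_lt l : 0 < l < 2 -> ltZ (phi zt zq t1 q1 l) (zt, zq).
Proof.
  intro Hl. unfold ltZ, phi, M1, M2, Rmax, good in *; simpl.
  destruct (Rle_dec 0 (l-1)); destruct (Rle_dec 0 (1 - l)); split; nra.
Qed.

Lemma phi_mono l l' : l <= l' ->
  fst (phi zt zq t1 q1 l) <= fst (phi zt zq t1 q1 l') /\
  snd (phi zt zq t1 q1 l') <= snd (phi zt zq t1 q1 l).
Proof.
  intro Hl. unfold phi, M1, M2, Rmax, good in *; simpl.
  destruct (Rle_dec 0 (l-1)); destruct (Rle_dec 0 (l'-1));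
  destruct (Rle_dec 0 (1 - l)); destruct (Rle_dec 0 (1 - l')); split; nra.
Qed.

Lemma phi_inj l l' : l < l' -> phi zt zq t1 q1 l <> phi zt zq t1 q1 l'.
Proof.
  intros Hl E. unfold phi, M1, M2, Rmax, good in *.
  injection E; clear E; intros E2 E1.
  destruct (Rle_dec 0 (l-1)); destruct (Rle_dec 0 (l'-1));
  destruct (Rle_dec 0 (1 - l)); destruct (Rle_dec 0 (1 - l')); nra.
Qed.

Lemma phi0 : phi zt zq t1 q1 0 = (t1, zq).
Proof. unfold phi, M1, M2, Rmax. repeat destruct Rle_dec; try lra; f_equal; ring. Qed.
Lemma phi1 : phi zt zq t1 q1 1 = (t1, q1).
Proof. unfold phi, M1, M2. replace (1-1) with 0 by ring. rewrite Rmax_left by lra. f_equal; ring. Qed.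
Lemma phi2 : phi zt zq t1 q1 2 = (zt, q1).
Proof. unfold phi, M1, M2, Rmax. repeat destruct Rle_dec; try lra; f_equal; ring. Qed.

Lemma phi_cont e : 0 < e -> exists d, 0 < d /\ forall l l', Rabs (l - l') < d ->
  close e (phi zt zq t1 q1 l) (phi zt zq t1 q1 l').
Proof.
  intro He. unfold good in G.
  exists (e / (zt - t1 + zq - q1)). split. apply Rdiv_lt_0_compat; lra.
  intros l l' Hd. unfold close, phi; simpl.
  assert (C : 0 < zt - t1 + zq - q1) by lra.
  assert (Hd' : Rabs (l - l') * (zt - t1 + zq - q1) < e).
  { assert (E : e / (zt - t1 + zq - q1) * (zt - t1 + zq - q1) = e) by (field; lra).
    nra. }
  pose proof (Rabs_pos (l - l')).
  split.
  - replace (t1 + M1 l * (zt - t1) - (t1 + M1 l' * (zt - t1))) with ((M1 l - M1 l') * (zt - t1)) by ring.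
    rewrite Rabs_mult, (Rabs_pos_eq (zt - t1)) by lra.
    pose proof (Rmax0_lip (l - 1) (l' - 1)). fold (M1 l) (M1 l') in H0.
    replace (l - 1 - (l' - 1)) with (l - l') in H0 by ring.
    pose proof (Rabs_pos (M1 l - M1 l')). nra.
  - replace (q1 + M2 l * (zq - q1) - (q1 + M2 l' * (zq - q1))) with ((M2 l - M2 l') * (zq - q1)) by ring.
    rewrite Rabs_mult, (Rabs_pos_eq (zq - q1)) by lra.
    pose proof (Rmax0_lip (1 - l) (1 - l')). fold (M2 l) (M2 l') in H0.
    replace (1 - l - (1 - l')) with (- (l - l')) in H0 by ring. rewrite Rabs_Ropp in H0.
    pose proof (Rabs_pos (M2 l - M2 l')). nra.
Qed.

Lemma step_right l e : 0 <= l < 2 -> 0 < e -> exists l', l < l' <= 2 /\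
  close e (phi zt zq t1 q1 l') (phi zt zq t1 q1 l).
Proof.
  intros Hl He. destruct (phi_cont e He) as [d [Hd Hc]].
  exists (l + Rmin (d/2) ((2 - l)/2)). 
  assert (0 < Rmin (d/2) ((2 - l)/2)) by (apply Rmin_pos; lra).
  assert (Rmin (d/2) ((2 - l)/2) <= (2-l)/2) by apply Rmin_r.
  assert (Rmin (d/2) ((2 - l)/2) <= d/2) by apply Rmin_l.
  split. lra. apply Hc. replace (l + Rmin (d / 2) ((2 - l) / 2) - l) with (Rmin (d / 2) ((2 - l) / 2)) by ring.
  rewrite Rabs_pos_eq; lra.
Qed.

Lemma step_left l e : 0 < l <= 2 -> 0 < e -> exists l', 0 <= l' < l /\
  close e (phi zt zq t1 q1 l') (phi zt zq t1 q1 l).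
Proof.
  intros Hl He. destruct (phi_cont e He) as [d [Hd Hc]].
  exists (l - Rmin (d/2) (l/2)). 
  assert (0 < Rmin (d/2) (l/2)) by (apply Rmin_pos; lra).
  assert (Rmin (d/2) (l/2) <= l/2) by apply Rmin_r.
  assert (Rmin (d/2) (l/2) <= d/2) by apply Rmin_l.
  split. lra. apply Hc. replace (l - Rmin (d / 2) (l / 2) - l) with (- Rmin (d / 2) (l / 2)) by ring.
  rewrite Rabs_Ropp, Rabs_pos_eq; lra.
Qed.
End Phi.

Section IVT.
Variable Rl : Pref.
Hypothesis HR : classical Rl.
Variables zt zq t1 q1 : R.
Hypothesis G : good zt zq t1 q1.

Lemma phi0_strict : Pstrict Rl (phi zt zq t1 q1 0) (zt, zq).
Proof.
  rewrite phi0 by exact G. pose proof (good_Z _ _ _ _ G). unfold good in G.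
  apply sdom; auto. unfold inZ in *; simpl in *; lra. simpl; lra. simpl; lra.
  intro E; injection E; lra.
Qed.

Lemma phi2_strict : Pstrict Rl (zt, zq) (phi zt zq t1 q1 2).
Proof.
  rewrite phi2 by exact G. pose proof (good_Z _ _ _ _ G). unfold good in G.
  apply sdom; auto. unfold inZ in *; simpl in *; lra. simpl; lra. simpl; lra.
  intro E; injection E; lra.
Qed.

Lemma ivt : exists l, 0 < l < 2 /\ Indiff Rl (phi zt zq t1 q1 l) (zt, zq).
Proof.
  pose proof (good_Z _ _ _ _ G) as HZ.
  apply NNPP. intro H.
  destruct (conn 0 2 (fun l => ~ Rl (zt, zq) (phi zt zq t1 q1 l))
                     (fun l => ~ Rl (phi zt zq t1 q1 l) (zt, zq))) as [x [Hx [Ux Vx]]].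
  - lra.
  - intros x Hx Ux. destruct (open_of_closed _ _ (cl_lower Rl HR _ HZ) Ux) as [e [He Ho]].
    destruct (phi_cont _ _ _ _ G e He) as [d [Hd Hc]]. exists d. split; [exact Hd|].
    intros y Hy Hyx. apply Ho. apply Hc. auto.
  - intros x Hx Vx. destruct (open_of_closed _ _ (cl_upper Rl HR _ HZ) Vx) as [e [He Ho]].
    destruct (phi_cont _ _ _ _ G e He) as [d [Hd Hc]]. exists d. split; [exact Hd|].
    intros y Hy Hyx. apply Ho. apply Hc. auto.
  - intros x Hx. destruct (classic (Rl (zt, zq) (phi zt zq t1 q1 x))) as [A|A]; [|left; auto].
    destruct (classic (Rl (phi zt zq t1 q1 x) (zt, zq))) as [B|B]; [|right; auto].
    exfalso. destruct (Req_dec x 0) as [E|E].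
    { subst. apply (proj2 phi0_strict). auto. }
    destruct (Req_dec x 2) as [E2|E2].
    { subst. apply (proj2 phi2_strict). auto. }
    apply H. exists x. split. lra. split; auto.
  - apply (proj2 phi0_strict).
  - apply (proj2 phi2_strict).
  - apply Ux. apply cl_not; auto. apply phi_Z; auto.
Qed.
End IVT.

Definition lerp (a b s : R) := a + s * (b - a).
Lemma lerp0 a b : lerp a b 0 = a. Proof. unfold lerp; ring. Qed.
Lemma lerp1 a b : lerp a b 1 = b. Proof. unfold lerp; ring. Qed.
Lemma lerp_le a b c d s : 0 <= s <= 1 -> a <= c -> b <= d -> lerp a b s <= lerp c d s.
Proof. unfold lerp; intros; nra. Qed.
Lemma lerp_lt a b c d s : 0 <= s <= 1 -> a < c -> b < d -> lerp a b s < lerp c d s.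
Proof. unfold lerp; intros; destruct (Rlt_le_dec s 1). nra. assert (s = 1) by lra. subst; lra. Qed.
Lemma lerp_c c s : lerp c c s = c. Proof. unfold lerp; ring. Qed.

Lemma close_mono e e' a b : close e a b -> e <= e' -> close e' a b.
Proof. unfold close; intros [H1 H2] H; split; lra. Qed.

Lemma conv_abs a b M : 0 <= M <= 1 -> Rabs ((1 - M) * a + M * b) <= Rabs a + Rabs b.
Proof.
  intro HM. unfold Rabs. repeat destruct Rcase_abs; nra.
Qed.

Section Lin.
Variable D : Pref -> Prop.
Hypothesis HD : rich_single_crossing D.

Lemma D_cl R : D R -> classical R.
Proof. apply HD. Qed.
Lemma D_sc R1 R2 : D R1 -> D R2 -> R1 <> R2 -> single_crossing R1 R2.
Proof. apply HD. Qed.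
Lemma D_rich x1 x2 : inZ x1 -> inZ x2 -> ltZ x1 x2 -> exists R, D R /\ Indiff R x1 x2.
Proof. apply HD. Qed.

Lemma SL R1 R2 w z : D R1 -> D R2 -> precD R1 R2 -> inZ w -> inZ z -> ltZ w z ->
  Indiff R1 w z -> ~ R2 w z.
Proof.
  intros D1 D2 [Hne Hp] Hw Hz Hlt [I1 I2] H2.
  pose proof (D_cl _ D1) as C1. pose proof (D_cl _ D2) as C2.
  destruct (classic (R2 z w)) as [H|H].
  - assert (E : w = z).
    { apply (D_sc _ _ D1 D2 Hne z z Hz Hz w z); split; auto; apply cl_refl; auto. }
    subst. destruct Hlt; lra.
  - destruct (open_of_closed _ _ (cl_lower R2 C2 z Hz) H) as [e [He Ho]].
    destruct Hlt as [L1 L2].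
    set (w' := (fst w + Rmin (e/2) ((fst z - fst w)/2), snd w)).
    assert (0 < Rmin (e/2) ((fst z - fst w)/2)) by (apply Rmin_pos; lra).
    assert (Rmin (e/2) ((fst z - fst w)/2) <= e/2) by apply Rmin_l.
    assert (Rmin (e/2) ((fst z - fst w)/2) <= (fst z - fst w)/2) by apply Rmin_r.
    assert (Hw' : inZ w') by (unfold w', inZ in *; simpl; lra).
    assert (N : ~ R2 z w').
    { apply Ho. unfold close, w'; simpl. rewrite Rminus_diag, Rabs_R0.
      replace (fst w + Rmin (e / 2) ((fst z - fst w) / 2) - fst w) with (Rmin (e / 2) ((fst z - fst w) / 2)) by ring.
      rewrite Rabs_pos_eq; lra. }
    assert (A : R2 w' z) by (apply cl_not; auto).
    assert (B : R1 w' z).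
    { apply Hp; auto. split; auto. right. unfold ltZ, w'; simpl; lra. }
    assert (S : Pstrict R1 w w').
    { apply sdom; auto; unfold w'; simpl; try lra. intro E. apply (f_equal fst) in E; unfold w' in E; simpl in E. lra. }
    apply (proj2 S). eapply cl_trans; eauto.
Qed.

Lemma asym a b : D a -> D b -> precD a b -> precD b a -> False.
Proof.
  intros Da Db Hab Hba.
  assert (G : good 1 1 0 0) by (unfold good; lra).
  destruct (ivt a (D_cl _ Da) 1 1 0 0 G) as [l [Hl I]].
  pose proof (phi_lt _ _ _ _ G l Hl) as Lt. pose proof (phi_Z _ _ _ _ G l (conj (Rlt_le _ _ (proj1 Hl)) (Rlt_le _ _ (proj2 Hl)))) as Zw.
  apply (SL a b _ _ Da Db Hab Zw (good_Z _ _ _ _ G) Lt I).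
  apply (proj2 Hba). apply good_Z with (t1 := 0) (q1 := 0); auto. split; auto. right; auto.
  apply I.
Qed.

Lemma trans_prec a b c : D a -> D b -> D c -> precD a b -> precD b c -> precD a c.
Proof.
  intros Da Db Dc [N1 H1] [N2 H2]. split.
  - intro E. subst. apply (asym _ _ Da Db); split; auto.
  - intros z Hz x Hx H. apply H1; auto.
Qed.

Lemma trans_precsim a b c : D a -> D b -> D c -> precsimD a b -> precsimD b c -> precsimD a c.
Proof.
  unfold precsimD. intros Da Db Dc H1 H2. destruct H1 as [H1|H1]; destruct H2 as [H2|H2].
  { left. exact (trans_prec a b c Da Db Dc H1 H2). }
  { subst. left. exact H1. }
  { subst. left. exact H2. }
  { subst. right. reflexivity. }
Qed.

Lemma witness R1 R2 : D R1 -> R1 <> R2 -> ~ precD R1 R2 ->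
  exists z y, inZ z /\ inZ y /\ ltZ y z /\ R2 y z /\ ~ R1 y z.
Proof.
  intros D1 Hne Hn. apply NNPP. intro Hw. apply Hn. split; auto.
  intros z Hz x [Hx [E|Hlt]] H2.
  - subst. apply cl_refl; auto. apply D_cl; auto.
  - apply NNPP. intro H1. apply Hw. exists z, x. auto.
Qed.

Lemma lin R1 R2 : D R1 -> D R2 -> R1 <> R2 -> precD R1 R2 \/ precD R2 R1.
Proof.
  intros D1 D2 Hne.
  destruct (classic (precD R1 R2)) as [P|P]; [left; auto|].
  destruct (classic (precD R2 R1)) as [Q|Q]; [right; auto|].
  exfalso.
  pose proof (D_cl _ D1) as C1. pose proof (D_cl _ D2) as C2.
  destruct (witness R1 R2 D1 Hne P) as [[za1 za2] [[ya1 ya2] [ZA [YA [LA [A2 A1]]]]]].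
  assert (Hne' : R2 <> R1) by (intro E; apply Hne; symmetry; auto).
  destruct (witness R2 R1 D2 Hne' Q) as [[zb1 zb2] [[yb1 yb2] [ZB [YB [LB [B1 B2]]]]]].
  unfold inZ, ltZ in *; simpl in *.
  set (ZT := fun s => lerp za1 zb1 s). set (ZQ := fun s => lerp za2 zb2 s).
  set (T1 := fun s => lerp ya1 yb1 s). set (Q1 := fun s => lerp ya2 yb2 s).
  set (ph := fun s l => phi (ZT s) (ZQ s) (T1 s) (Q1 s) l).
  set (zs := fun s => (ZT s, ZQ s)).
  assert (Gs : forall s, 0 <= s <= 1 -> good (ZT s) (ZQ s) (T1 s) (Q1 s)).
  { intros s Hs. unfold good, ZT, ZQ, T1, Q1.
    repeat split.
    unfold lerp; nra. apply lerp_lt; lra. unfold lerp; nra. apply lerp_lt; lra. unfold lerp; nra. }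
  set (K := 1 + Rabs (zb1 - za1) + Rabs (yb1 - ya1) + Rabs (zb2 - za2) + Rabs (yb2 - ya2)).
  assert (HK : 0 < K).
  { unfold K. pose proof (Rabs_pos (zb1 - za1)). pose proof (Rabs_pos (yb1 - ya1)).
    pose proof (Rabs_pos (zb2 - za2)). pose proof (Rabs_pos (yb2 - ya2)). lra. }
  assert (Lip : forall e, 0 < e -> exists d, 0 < d /\ forall s s', Rabs (s' - s) < d ->
     forall l, 0 <= l <= 2 -> close e (ph s' l) (ph s l) /\ close e (zs s') (zs s)).
  { intros e He. exists (e / K). split. apply Rdiv_lt_0_compat; auto.
    intros s s' Hd l Hl.
    assert (Hd' : Rabs (s' - s) * K < e).
    { assert (E : e / K * K = e) by (field; lra). pose proof (Rabs_pos (s'-s)). nra. }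
    pose proof (M1_range l Hl). pose proof (M2_range l Hl).
    pose proof (Rabs_pos (zb1 - za1)). pose proof (Rabs_pos (yb1 - ya1)).
    pose proof (Rabs_pos (zb2 - za2)). pose proof (Rabs_pos (yb2 - ya2)).
    pose proof (Rabs_pos (s' - s)).
    unfold close, ph, zs, phi, ZT, ZQ, T1, Q1, lerp; simpl.
    split; split.
    - replace (ya1 + s' * (yb1 - ya1) + M1 l * (za1 + s' * (zb1 - za1) - (ya1 + s' * (yb1 - ya1))) -
               (ya1 + s * (yb1 - ya1) + M1 l * (za1 + s * (zb1 - za1) - (ya1 + s * (yb1 - ya1)))))
        with ((s' - s) * ((1 - M1 l) * (yb1 - ya1) + M1 l * (zb1 - za1))) by ring.
      rewrite Rabs_mult. pose proof (conv_abs (yb1 - ya1) (zb1 - za1) (M1 l) H).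
      assert (Rabs ((1 - M1 l) * (yb1 - ya1) + M1 l * (zb1 - za1)) <= K) by (unfold K; lra).
      nra.
    - replace (ya2 + s' * (yb2 - ya2) + M2 l * (za2 + s' * (zb2 - za2) - (ya2 + s' * (yb2 - ya2))) -
               (ya2 + s * (yb2 - ya2) + M2 l * (za2 + s * (zb2 - za2) - (ya2 + s * (yb2 - ya2)))))
        with ((s' - s) * ((1 - M2 l) * (yb2 - ya2) + M2 l * (zb2 - za2))) by ring.
      rewrite Rabs_mult. pose proof (conv_abs (yb2 - ya2) (zb2 - za2) (M2 l) H0).
      assert (Rabs ((1 - M2 l) * (yb2 - ya2) + M2 l * (zb2 - za2)) <= K) by (unfold K; lra).
      nra.
    - replace (za1 + s' * (zb1 - za1) - (za1 + s * (zb1 - za1))) with ((s' - s) * (zb1 - za1)) by ring.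
      rewrite Rabs_mult. assert (Rabs (zb1 - za1) <= K) by (unfold K; lra). nra.
    - replace (za2 + s' * (zb2 - za2) - (za2 + s * (zb2 - za2))) with ((s' - s) * (zb2 - za2)) by ring.
      rewrite Rabs_mult. assert (Rabs (zb2 - za2) <= K) by (unfold K; lra). nra. }
  set (Sneg := fun s => exists l, 0 <= l <= 2 /\ R2 (ph s l) (zs s) /\ ~ R1 (ph s l) (zs s)).
  set (Spos := fun s => exists l, 0 <= l <= 2 /\ ~ R2 (ph s l) (zs s) /\ R1 (ph s l) (zs s)).
  assert (Zz : forall s, 0 <= s <= 1 -> inZ (zs s)).
  { intros s Hs. exact (good_Z _ _ _ _ (Gs s Hs)). }
  assert (Zp : forall s l, 0 <= s <= 1 -> 0 <= l <= 2 -> inZ (ph s l)).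
  { intros s l Hs Hl. exact (phi_Z _ _ _ _ (Gs s Hs) l Hl). }
  assert (Mo : forall s l l', 0 <= s <= 1 -> l <= l' -> fst (ph s l) <= fst (ph s l') /\ snd (ph s l') <= snd (ph s l)).
  { intros s l l' Hs H. exact (phi_mono _ _ _ _ (Gs s Hs) l l' H). }
  assert (Inj : forall s l l', 0 <= s <= 1 -> l < l' -> ph s l <> ph s l').
  { intros s l l' Hs H. exact (phi_inj _ _ _ _ (Gs s Hs) l l' H). }
  destruct (conn 0 1 Sneg Spos) as [s [Hs [[la [Hla [Na1 Na2]]] [lb [Hlb [Nb1 Nb2]]]]]].
  - lra.
  - intros s Hs [l [Hl [H2 H1]]].
    assert (l0 : 0 < l).
    { destruct (Req_dec l 0) as [E|E]; [|lra]. subst. exfalso. apply H1.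
      exact (proj1 (phi0_strict R1 C1 _ _ _ _ (Gs s Hs))). }
    destruct (open_of_closed _ (ph s l) (cl_upper R1 C1 (zs s) (Zz s Hs)) H1) as [e1 [He1 Ho1]].
    destruct (step_left _ _ _ _ (Gs s Hs) l e1 (conj l0 (proj2 Hl)) He1) as [l' [Hl' Hc]].
    assert (Hl'r : 0 <= l' <= 2) by lra.
    assert (N1 : ~ R1 (ph s l') (zs s)) by (apply Ho1; exact Hc).
    assert (S2 : Pstrict R2 (ph s l') (ph s l)).
    { apply sdom; auto. apply Mo; lra. apply Mo; lra. apply Inj; auto. lra. }
    assert (SW : Pstrict R2 (ph s l') (zs s)) by (eapply strict_weak; eauto).
    destruct (joint_open R2 C2 (ph s l') (zs s) (Zp s l' Hs Hl'r) (Zz s Hs) (proj1 SW) (proj2 SW)) as [e2 [He2 Ho2]].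
    assert (R1zs : R1 (zs s) (ph s l')) by (apply cl_not; auto).
    destruct (joint_open R1 C1 (zs s) (ph s l') (Zz s Hs) (Zp s l' Hs Hl'r) R1zs N1) as [e3 [He3 Ho3]].
    destruct (Lip (Rmin e2 e3) (Rmin_pos _ _ He2 He3)) as [d [Hd HL]].
    exists d. split; [exact Hd|]. intros y Hy Hyd.
    destruct (HL s y Hyd l' Hl'r) as [Ca Cb].
    exists l'. split; [exact Hl'r|]. split.
    + apply (Ho2 (ph y l') (zs y)); auto. eapply close_mono; eauto. apply Rmin_l.
      eapply close_mono; eauto. apply Rmin_l.
    + apply (Ho3 (zs y) (ph y l')); auto. eapply close_mono; eauto. apply Rmin_r.
      eapply close_mono; eauto. apply Rmin_r.
  - intros s Hs [l [Hl [H2 H1]]].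
    assert (l0 : 0 < l).
    { destruct (Req_dec l 0) as [E|E]; [|lra]. subst. exfalso. apply H2.
      exact (proj1 (phi0_strict R2 C2 _ _ _ _ (Gs s Hs))). }
    destruct (open_of_closed _ (ph s l) (cl_upper R2 C2 (zs s) (Zz s Hs)) H2) as [e1 [He1 Ho1]].
    destruct (step_left _ _ _ _ (Gs s Hs) l e1 (conj l0 (proj2 Hl)) He1) as [l' [Hl' Hc]].
    assert (Hl'r : 0 <= l' <= 2) by lra.
    assert (N1 : ~ R2 (ph s l') (zs s)) by (apply Ho1; exact Hc).
    assert (S2 : Pstrict R1 (ph s l') (ph s l)).
    { apply sdom; auto. apply Mo; lra. apply Mo; lra. apply Inj; auto. lra. }
    assert (SW : Pstrict R1 (ph s l') (zs s)) by (eapply strict_weak; eauto).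
    destruct (joint_open R1 C1 (ph s l') (zs s) (Zp s l' Hs Hl'r) (Zz s Hs) (proj1 SW) (proj2 SW)) as [e2 [He2 Ho2]].
    assert (R2zs : R2 (zs s) (ph s l')) by (apply cl_not; auto).
    destruct (joint_open R2 C2 (zs s) (ph s l') (Zz s Hs) (Zp s l' Hs Hl'r) R2zs N1) as [e3 [He3 Ho3]].
    destruct (Lip (Rmin e2 e3) (Rmin_pos _ _ He2 He3)) as [d [Hd HL]].
    exists d. split; [exact Hd|]. intros y Hy Hyd.
    destruct (HL s y Hyd l' Hl'r) as [Ca Cb].
    exists l'. split; [exact Hl'r|]. split.
    + apply (Ho3 (zs y) (ph y l')); auto. eapply close_mono; eauto. apply Rmin_r.
      eapply close_mono; eauto. apply Rmin_r.
    + apply (Ho2 (ph y l') (zs y)); auto. eapply close_mono; eauto. apply Rmin_l.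
      eapply close_mono; eauto. apply Rmin_l.
  - intros s Hs.
    destruct (ivt R2 C2 _ _ _ _ (Gs s Hs)) as [l [Hl [I1 I2]]].
    assert (Hlr : 0 <= l <= 2) by lra.
    assert (Lt : ltZ (ph s l) (zs s)) by exact (phi_lt _ _ _ _ (Gs s Hs) l Hl).
    destruct (classic (R1 (ph s l) (zs s))) as [A|A].
    2: { left. exists l. auto. }
    right.
    assert (NA : ~ R1 (zs s) (ph s l)).
    { intro B. assert (E : ph s l = zs s).
      { apply (D_sc R1 R2 D1 D2 Hne (zs s) (zs s) (Zz s Hs) (Zz s Hs) (ph s l) (zs s)); split; auto;
        apply cl_refl; auto. }
      rewrite E in Lt. destruct Lt; lra. }
    destruct (open_of_closed _ (ph s l) (cl_lower R1 C1 (zs s) (Zz s Hs)) NA) as [e [He Ho]].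
    destruct (step_right _ _ _ _ (Gs s Hs) l e (conj (proj1 Hlr) (proj2 Hl)) He) as [l' [Hl' Hc]].
    assert (Hl'r : 0 <= l' <= 2) by lra.
    exists l'. split; [exact Hl'r|]. split.
    + intro B. assert (S2 : Pstrict R2 (ph s l) (ph s l')).
      { apply sdom; auto. apply Mo; lra. apply Mo; lra. apply Inj; auto. lra. }
      apply (proj2 S2). eapply cl_trans; eauto.
    + apply cl_not; auto; apply Ho; exact Hc.
  - exists 1. split. lra.
    assert (E0 : ph 0 1 = (ya1, ya2)).
    { unfold ph. rewrite phi1 by (apply Gs; lra). unfold T1, Q1. rewrite !lerp0. reflexivity. }
    assert (Z0 : zs 0 = (za1, za2)) by (unfold zs, ZT, ZQ; rewrite !lerp0; reflexivity).
    rewrite E0, Z0. auto.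
  - exists 1. split. lra.
    assert (E0 : ph 1 1 = (yb1, yb2)).
    { unfold ph. rewrite phi1 by (apply Gs; lra). unfold T1, Q1. rewrite !lerp1. reflexivity. }
    assert (Z0 : zs 1 = (zb1, zb2)) by (unfold zs, ZT, ZQ; rewrite !lerp1; reflexivity).
    rewrite E0, Z0. auto.
  - destruct (Rle_dec la lb) as [L|L].
    + apply Na2. apply (cl_trans R1 C1 _ (ph s lb)); [|exact Nb2]. apply wdom; auto. apply Mo; auto. apply Mo; auto.
    + apply Nb1. apply (cl_trans R2 C2 _ (ph s la)); [|exact Na1]. apply wdom; auto. apply Mo; lra. apply Mo; lra.
Qed.

Section PW.
Variable Rl : Pref.
Variable Rs : nat -> Pref.
Hypothesis DRl : D Rl.
Hypothesis DRs : forall n, D (Rs n).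
Hypothesis Hconv : order_converges D Rs Rl.

Lemma pw w z : inZ w -> inZ z -> Pstrict Rl w z ->
  exists N, forall n, (N <= n)%nat -> Pstrict (Rs n) w z.
Proof.
  intros Hw Hz [Hwz Hnzw].
  pose proof (D_cl _ DRl) as Cl.
  destruct w as [w1 w2], z as [z1 z2].
  destruct (classic (w1 <= z1 /\ z2 <= w2)) as [I|NI].
  { exists 0%nat. intros n _. apply sdom; auto. apply D_cl; auto. apply I. apply I.
    intro E. apply Hnzw. rewrite E. apply cl_refl; auto. }
  destruct (classic (z1 <= w1 /\ w2 <= z2)) as [I2|NI2].
  { exfalso. apply Hnzw. apply wdom; auto; apply I2. }
  assert (C : (z1 < w1 /\ z2 < w2) \/ (w1 < z1 /\ w2 < z2)).
  { destruct (Rle_lt_dec w1 z1); destruct (Rle_lt_dec z2 w2); destruct (Rle_lt_dec z1 w1);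
    destruct (Rle_lt_dec w2 z2);
    first [ exfalso; apply NI; split; assumption | exfalso; apply NI2; split; assumption
          | left; split; assumption | right; split; assumption | lra ]. }
  unfold inZ in Hw, Hz; simpl in Hw, Hz.
  destruct C as [[L1 L2]|[L1 L2]].
  -
    destruct (open_of_closed _ (z1, z2) (cl_upper Rl Cl (w1, w2) Hw) Hnzw) as [e [He Ho]].
    set (d := Rmin (e/2) ((w2 - z2)/2)).
    assert (0 < d) by (apply Rmin_pos; lra).
    assert (d <= e/2) by apply Rmin_l.
    assert (d <= (w2 - z2)/2) by apply Rmin_r.
    set (z' := (z1, z2 + d)).
    assert (Zz' : inZ z') by (unfold z', inZ; simpl; lra).
    assert (N' : ~ Rl z' (w1, w2)).
    { apply Ho. unfold close, z'; simpl. rewrite Rminus_diag, Rabs_R0.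
      replace (z2 + d - z2) with d by ring. rewrite Rabs_pos_eq; lra. }
    destruct (D_rich z' (w1, w2) Zz' Hw) as [a [Da [Ia1 Ia2]]].
    { unfold ltZ, z'; simpl; lra. }
    assert (Hne : a <> Rl) by (intro E; subst; auto).
    destruct (lin a Rl Da DRl Hne) as [P|P].
    + destruct ((proj1 Hconv) a Da P) as [N HN]. exists N. intros n Hn.
      destruct (HN n Hn) as [_ Hp].
      pose proof (D_cl _ (DRs n)) as Cn. pose proof (D_cl _ Da) as Ca.
      assert (NZ : ~ Rs n (z1, z2) (w1, w2)).
      { intro Hq. assert (A : a (z1, z2) (w1, w2)).
        { apply Hp; auto. split; auto. right; unfold ltZ; simpl; lra. }
        assert (S : Pstrict a z' (z1, z2)).
        { apply sdom; auto; unfold z'; simpl; try lra. intro E. injection E; lra. }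
        apply (proj2 S). eapply cl_trans; eauto. }
      split; [apply cl_not; auto|exact NZ].
    + exfalso. destruct P as [_ Hp]. apply N'. apply Hp; auto. split; auto.
      right; unfold ltZ, z'; simpl; lra.
  -
    destruct (open_of_closed _ (w1, w2) (cl_lower Rl Cl (z1, z2) Hz) Hnzw) as [e [He Ho]].
    set (d := Rmin (e/2) ((z1 - w1)/2)).
    assert (0 < d) by (apply Rmin_pos; lra).
    assert (d <= e/2) by apply Rmin_l.
    assert (d <= (z1 - w1)/2) by apply Rmin_r.
    set (w' := (w1 + d, w2)).
    assert (Zw' : inZ w') by (unfold w', inZ; simpl; lra).
    assert (N' : ~ Rl (z1, z2) w').
    { apply Ho. unfold close, w'; simpl. rewrite Rminus_diag, Rabs_R0.
      replace (w1 + d - w1) with d by ring. rewrite Rabs_pos_eq; lra. }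
    assert (Lt : ltZ w' (z1, z2)) by (unfold ltZ, w'; simpl; lra).
    destruct (D_rich w' (z1, z2) Zw' Hz Lt) as [b [Db Ib]].
    assert (Hne : b <> Rl) by (intro E; subst; apply N'; apply Ib).
    destruct (lin b Rl Db DRl Hne) as [P|P].
    + exfalso. apply (SL b Rl w' (z1, z2) Db DRl P Zw' Hz Lt Ib). apply cl_not; auto.
    + destruct ((proj2 Hconv) b Db P) as [N HN]. exists N. intros n Hn.
      destruct (HN n Hn) as [_ Hp].
      pose proof (D_cl _ (DRs n)) as Cn.
      assert (A : Rs n w' (z1, z2)).
      { apply Hp; auto. split; auto. right; auto. apply Ib. }
      assert (S : Pstrict (Rs n) (w1, w2) w').
      { apply sdom; auto; unfold w'; simpl; try lra. intro E. injection E; lra. }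
      eapply strict_weak; eauto.
Qed.
End PW.

Lemma case4 (x y : pt) : ltZ x y \/ ltZ y x \/ (fst y <= fst x /\ snd x <= snd y) \/
  (fst x <= fst y /\ snd y <= snd x).
Proof.
  destruct x as [x1 x2], y as [y1 y2]; unfold ltZ; simpl.
  destruct (Rlt_le_dec x1 y1); destruct (Rlt_le_dec x2 y2); destruct (Rlt_le_dec y1 x1);
  destruct (Rlt_le_dec y2 x2);
  first [ left; split; assumption | right; left; split; assumption
        | right; right; left; split; assumption | right; right; right; split; assumption
        | right; right; right; split; lra | right; right; left; split; lra | lra ].
Qed.

Section Main.
Variable F : Pref -> pt.
Hypothesis Hmech : mechanism D F.
Hypothesis HSP : strategy_proof D F.

Lemma mono_thm : monotone D F.
Proof.
  intros R1 R2 D1 D2 H.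
  pose proof (HSP R1 R2 D1 D2) as S12. pose proof (HSP R2 R1 D2 D1) as S21.
  pose proof (Hmech R1 D1) as Z1. pose proof (Hmech R2 D2) as Z2.
  pose proof (D_cl _ D1) as C1. pose proof (D_cl _ D2) as C2.
  destruct (classic (F R1 = F R2)) as [E|E]; [left; exact E|].
  destruct (case4 (F R1) (F R2)) as [L|[L|[L|L]]].
  - right; exact L.
  - exfalso. destruct H as [Hne Hp].
    assert (A : R1 (F R2) (F R1)). { apply Hp; auto. split; auto. right; auto. }
    apply (SL R1 R2 (F R2) (F R1) D1 D2 (conj Hne Hp) Z2 Z1 L (conj A S12) S21).
  - exfalso. assert (S : Pstrict R1 (F R2) (F R1)).
    { apply sdom; auto; try apply L. }
    apply (proj2 S). exact S12.
  - exfalso. assert (S : Pstrict R2 (F R1) (F R2)).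
    { apply sdom; auto; try apply L. }
    apply (proj2 S). exact S21.
Qed.

Lemma ordered_thm : ordered_range D F.
Proof.
  intros x y [R1 [D1 E1]] [R2 [D2 E2]] Hne. subst.
  pose proof (HSP R1 R2 D1 D2) as S12. pose proof (HSP R2 R1 D2 D1) as S21.
  pose proof (Hmech R1 D1) as Z1. pose proof (Hmech R2 D2) as Z2.
  pose proof (D_cl _ D1) as C1. pose proof (D_cl _ D2) as C2.
  destruct (case4 (F R1) (F R2)) as [L|[L|[L|L]]].
  - left; exact L.
  - right; exact L.
  - exfalso. assert (S : Pstrict R1 (F R2) (F R1)).
    { apply sdom; auto; try apply L. }
    apply (proj2 S). exact S12.
  - exfalso. assert (S : Pstrict R2 (F R1) (F R2)).
    { apply sdom; auto; try apply L. }
    apply (proj2 S). exact S21.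
Qed.

Lemma lsp_thm : locally_sp_in_range D F.
Proof.
  split. exact ordered_thm. intros R1 R2 D1 D2 _. split; apply HSP; auto.
Qed.

Lemma precsim_le R R' : D R -> D R' -> precsimD R R' -> leZ (F R) (F R').
Proof.
  intros DR DR' [H|H]. apply mono_thm; auto. subst. left; reflexivity.
Qed.

Lemma leZ_coord a b : leZ a b -> fst a <= fst b /\ snd a <= snd b.
Proof. intros [E|[L1 L2]]. subst; lra. lra. Qed.

Section VF.
Variable Rl : Pref.
Variable Rs : nat -> Pref.
Hypothesis DRl : D Rl.
Hypothesis DRs : forall n, D (Rs n).
Hypothesis Hconv : order_converges D Rs Rl.

Lemma finish l1 l2 :
  Un_cv (fun n => fst (F (Rs n))) l1 -> Un_cv (fun n => snd (F (Rs n))) l2 ->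
  (forall e, 0 < e -> inZ (l1, l2) -> exists l'', inZ l'' /\ close e l'' (l1, l2) /\
     exists N, forall n, (N <= n)%nat -> fst l'' <= fst (F (Rs n)) /\ snd (F (Rs n)) <= snd l'') ->
  exists l : pt, filterlim (fun n => F (Rs n)) eventually (locally l) /\ Indiff Rl l (F Rl).
Proof.
  intros Cu Cv Hd.
  pose proof (D_cl _ DRl) as Cl. pose proof (Hmech Rl DRl) as Zx.
  assert (Conv : forall e, 0 < e -> exists N, forall n, (N <= n)%nat -> close e (F (Rs n)) (l1, l2)).
  { intros e He. destruct (Cu e He) as [N1 H1]. destruct (Cv e He) as [N2 H2].
    exists (max N1 N2). intros n Hn. unfold close; simpl. split.
    apply H1. lia. apply H2. lia. }
  exists (l1, l2). split.
  - intros P [eps He]. unfold filtermap.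
    destruct (Conv eps (cond_pos eps)) as [N HN]. exists N. intros n Hn.
    apply He. apply ball_close. apply HN; auto.
  - assert (A : Rl (F Rl) (l1, l2)).
    { apply (closed_lim _ _ (cl_lower Rl Cl _ Zx)). intros e He.
      destruct (Conv e He) as [N HN]. exists (F (Rs N)). split. apply HN; lia.
      apply HSP; auto. }
    assert (Zl : inZ (l1, l2)) by (apply (cl_Z Rl Cl _ _ A)).
    split; [|exact A].
    apply NNPP. intro B.
    destruct (open_of_closed _ _ (cl_upper Rl Cl _ Zx) B) as [e [He Ho]].
    destruct (Hd e He Zl) as [l'' [Zl'' [Cl'' [N1 HN1]]]].
    assert (S : Pstrict Rl (F Rl) l'').
    { split. apply cl_not; auto. apply Ho; auto. }
    destruct (pw Rl Rs DRl DRs Hconv (F Rl) l'' Zx Zl'' S) as [N2 HN2].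
    set (n := max N1 N2).
    pose proof (D_cl _ (DRs n)) as Cn.
    assert (W : Rs n l'' (F (Rs n))).
    { apply wdom; auto; try (apply Hmech; auto); apply HN1; unfold n; lia. }
    assert (S2 : Pstrict (Rs n) (F Rl) (F (Rs n))).
    { eapply strict_weak; eauto. apply HN2. unfold n; lia. }
    apply (proj2 S2). apply HSP; auto.
Qed.
End VF.

Lemma vf_thm : VF_continuous D F.
Proof.
  intros Rl DRl Rs DRs Hmon Hconv.
  set (u := fun n => fst (F (Rs n))). set (v := fun n => snd (F (Rs n))).
  assert (Zn : forall n, inZ (F (Rs n))) by (intro n; apply Hmech; auto).
  destruct Hmon as [Hinc|Hdec].
  - assert (chain : forall n k, precsimD (Rs n) (Rs (k + n)%nat)).
    { intros n k. induction k. right; reflexivity.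
      apply (trans_precsim _ (Rs (k + n)%nat)); auto. }
    assert (below : forall n, precsimD (Rs n) Rl).
    { intro n. destruct (classic (Rs n = Rl)) as [E|E]; [right; auto|].
      destruct (lin (Rs n) Rl (DRs n) DRl E) as [P|P]; [left; auto|].
      exfalso. destruct ((proj2 Hconv) (Rs n) (DRs n) P) as [N HN].
      pose proof (HN (N + n)%nat ltac:(lia)) as Q. pose proof (chain n N) as Ch.
      destruct Ch as [Ch|Ch].
      - apply (asym _ _ (DRs n) (DRs _) Ch Q).
      - rewrite <- Ch in Q. destruct Q as [Q _]. apply Q; reflexivity. }
    assert (Lx : forall n, fst (F (Rs n)) <= fst (F Rl) /\ snd (F (Rs n)) <= snd (F Rl)).
    { intro n. apply leZ_coord. apply precsim_le; auto. }
    assert (Lst : forall n, fst (F (Rs n)) <= fst (F (Rs (S n))) /\ snd (F (Rs n)) <= snd (F (Rs (S n)))).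
    { intro n. apply leZ_coord. apply precsim_le; auto. }
    destruct (growing_cv u) as [l1 Cu].
    { intro n. apply Lst. }
    { exists (fst (F Rl)). intros r [i Hi]. subst. apply Lx. }
    destruct (growing_cv v) as [l2 Cv].
    { intro n. apply Lst. }
    { exists 1. intros r [i Hi]. subst. unfold v. destruct (Zn i); lra. }
    apply (finish Rl Rs DRl DRs Hconv l1 l2 Cu Cv).
    intros e He Zl. exists (Rmax 0 (l1 - e/2), l2).
    unfold inZ in Zl; simpl in Zl.
    assert (M1 : 0 <= Rmax 0 (l1 - e/2)) by apply Rmax_l.
    assert (M2 : l1 - e/2 <= Rmax 0 (l1 - e/2)) by apply Rmax_r.
    assert (M3 : Rmax 0 (l1 - e/2) <= l1) by (apply Rmax_lub; lra).
    split. unfold inZ; simpl; lra.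
    split. unfold close; simpl. rewrite Rminus_diag, Rabs_R0. split; [|lra].
    rewrite Rabs_left1 by lra. lra.
    destruct (Cu (e/2) ltac:(lra)) as [N HN]. exists N. intros n Hn. simpl. split.
    + apply Rmax_lub. apply (Zn n). specialize (HN n Hn). unfold R_dist, u in HN.
      apply Rabs_def2 in HN. lra.
    + apply (growing_ineq v); auto. intro k. apply Lst.
  - assert (Lst : forall n, fst (F (Rs (S n))) <= fst (F (Rs n)) /\ snd (F (Rs (S n))) <= snd (F (Rs n))).
    { intro n. apply leZ_coord. apply precsim_le; auto. }
    destruct (decreasing_cv u) as [l1 Cu].
    { intro n. apply Lst. }
    { exists 0. intros r [i Hi]. subst. unfold opp_seq, u. destruct (Zn i); lra. }
    destruct (decreasing_cv v) as [l2 Cv].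
    { intro n. apply Lst. }
    { exists 0. intros r [i Hi]. subst. unfold opp_seq, v. destruct (Zn i); lra. }
    apply (finish Rl Rs DRl DRs Hconv l1 l2 Cu Cv).
    intros e He Zl. exists (l1, Rmin 1 (l2 + e/2)).
    unfold inZ in Zl; simpl in Zl.
    assert (M1 : Rmin 1 (l2 + e/2) <= 1) by apply Rmin_l.
    assert (M2 : Rmin 1 (l2 + e/2) <= l2 + e/2) by apply Rmin_r.
    assert (M3 : l2 <= Rmin 1 (l2 + e/2)) by (apply Rmin_glb; lra).
    split. unfold inZ; simpl; lra.
    split. unfold close; simpl. rewrite Rminus_diag, Rabs_R0. split; [lra|].
    rewrite Rabs_pos_eq; lra.
    destruct (Cv (e/2) ltac:(lra)) as [N HN]. exists N. intros n Hn. simpl. split.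
    + apply (decreasing_ineq u); auto. intro k. apply Lst.
    + apply Rmin_glb. apply (Zn n). specialize (HN n Hn). unfold R_dist, v in HN.
      apply Rabs_def2 in HN. lra.
Qed.
End Main.
End Lin.

Theorem mainTheorem7 (D : Pref -> Prop) (F : Pref -> pt) :
  rich_single_crossing D ->
  mechanism D F ->
  strategy_proof D F ->
  monotone D F /\ VF_continuous D F /\ locally_sp_in_range D F.
Proof.
  intros HD Hm Hs. split; [|split].
  - apply (mono_thm D HD F Hm Hs).
  - apply (vf_thm D HD F Hm Hs).
  - apply (lsp_thm D HD F Hm Hs).
Qed.
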